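(* Let $h=8/15$, $a=3/15$, and for $p,q,r\in(0,1/36)$ let $K_{pqr}$ be the attractor of $\mathcal S_{pqr}=\{S_1,\dots,S_6\}$ with $S_1(x)=px$, $S_2(x)=a+rx$, $S_3(x)=h-qx$, $S_4(x)=h-r+rx$, $S_5(x)=1-a-rx$, $S_6(x)=1-r+rx$. Say $\mathcal S_{pqr}$ has unique one-point intersection if $S_3(K_{pqr})\cap S_4(K_{pqr})=\{h\}$. Then for each $r\in(0,1/36)$, the set of $(p,q)\in(0,r)^2$ for which $\mathcal S_{pqr}$ has unique one-point intersection has full Lebesgue measure in $(0,r)^2$, and for each $p\in(0,r)$ the set of $q\in(0,r)$ for which $\mathcal S_{pqr}$ has unique one-point intersection has full Lebesgue measure in $(0,r)$.
   Context: By construction, all pieces $S_i(K_{pqr})$, $i=1,\dots,6$, are pairwise disjoint except possibly $S_3(K_{pqr})$ and $S_4(K_{pqr})$, whose intersection always contains $h$. *)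

(* Defs.v *)
From HB Require Import structures.
From mathcomp Require Import all_boot all_order all_algebra.
From mathcomp Require Import all_classical all_reals all_analysis.
Set Implicit Arguments. Unset Strict Implicit. Unset Printing Implicit Defensive.
Import Order.TTheory GRing.Theory Num.Theory.
Import numFieldNormedType.Exports.
Local Open Scope classical_set_scope.
Local Open Scope ring_scope.

Section Defs.
Variable R : realType.

Definition hh : R := 8 / 15.
Definition aa : R := 3 / 15.

(* The six maps S_1, ..., S_6 of S_pqr, indexed by i : 'I_6 (i = 0..5 <-> S_1..S_6). *)
Definition Smap (p q r : R) (i : 'I_6) (x : R) : R :=
  match val i with
  | 0 => p * x
  | 1 => aa + r * x
  | 2 => hh - q * x
  | 3 => hh - r + r * x
  | 4 => 1 - aa - r * x
  | _ => 1 - r + r * x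
  end.

(* K is the attractor of S_pqr: the nonempty compact set with
   K = S_1(K) u ... u S_6(K) (unique by Hutchinson's theorem). *)
Definition is_attractor (p q r : R) (K : set R) : Prop :=
  compact K /\ K !=set0 /\ K = \bigcup_(i in [set: 'I_6]) (Smap p q r i @` K).

Definition unique_one_point (p q r : R) : Prop :=
  forall K, is_attractor p q r K ->
    (Smap p q r (inord 2) @` K) `&` (Smap p q r (inord 3) @` K) = [set hh].
End Defs.

(* Main.v *)
Require Import Defs.
From HB Require Import structures.
From mathcomp Require Import all_boot all_order all_algebra.
From mathcomp Require Import all_classical all_reals all_analysis.
From mathcomp Require Import measurable_realfun.
From mathcomp Require Import ring lra.
Import Order.TTheory GRing.Theory Num.Theory.
Import numFieldNormedType.Exports.
Local Open Scope classical_set_scope.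
Local Open Scope ring_scope.
Set Implicit Arguments. Unset Strict Implicit.
Lemma pow_small (R : realType) (x e : R) (m : nat) : 0 <= x < 1 -> 0 < e ->
  exists N, (m <= N)%N /\ x ^+ N < e.
Proof.
move=> /andP[x0 x1] e0.
have hx : `|x| < 1 by rewrite ger0_norm.
have := @cvgr_lt _ _ _ _ _ _ (cvg_expr hx) e e0.
move=> [N _ HN]; exists (maxn m N); split; first exact: leq_maxl.
apply: HN => /=; exact: leq_maxr.
Qed.

Lemma closure0 (R : realType) (K : set R) (c : R) :
  compact K -> (forall e, 0 < e -> exists y, K y /\ `|c - y| < e) -> K c.
Proof.
move=> Kc H; apply: (compact_closed (@Rhausdorff R) Kc).
move=> B /nbhs_ballP [e e0 HB].
have [y [Ky hy]] := H e e0; exists y; split => //; apply: HB.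
by rewrite -ball_normE /=.
Qed.

Lemma bounded_ex (R : realType) (K : set R) : compact K ->
  exists M, forall y, K y -> `|y| <= M.
Proof.
move=> /compact_bounded [M [_ HM]]; exists (M + 1) => y Ky.
by apply: (HM (M+1)) => //; rewrite ltrDl.
Qed.
Section S.
Variable R : realType.
Variable r : R.
Hypothesis r0 : 0 < r.
Hypothesis r1 : r < 1/36.

Ltac icase i := have ? := r0; have ? := r1; case: i => -[|[|[|[|[|[|?]]]]]] ?; rewrite /Smap /hh /aa /=.

Lemma Smap_lip p q i x y : 0 <= p <= r -> 0 <= q <= r ->
  `|Smap p q r i x - Smap p q r i y| <= r * `|x - y|.
Proof.
move=> /andP[p0 pr] /andP[q0 qr].
have r1' : 0 <= r by apply: ltW.
have h1 := ler_norm (x - y). have h2 : - (x - y) <= `|x - y| by rewrite -normrN ler_norm.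
rewrite ler_norml.
icase i; apply/andP; split; nra.
Qed.

Lemma Smap01 p q i x : 0 <= p <= r -> 0 <= q <= r -> 0 <= x <= 1 ->
  0 <= Smap p q r i x <= 1.
Proof.
move=> /andP[p0 pr] /andP[q0 qr] /andP[x0 x1].
have r1' : 0 <= r by apply: ltW.
have hc : forall c, 0 <= c -> 0 <= c * x <= c.
  move=> c c0; rewrite mulr_ge0 //=; rewrite -[leRHS]mulr1; exact: ler_wpM2l.
have := hc p p0; have := hc q q0; have := hc r r1'.
move=> /andP[? ?] /andP[? ?] /andP[? ?].
icase i; apply/andP; split; lra. 
Qed.

Lemma Smap_ext p q i x D : 0 <= p <= r -> 0 <= q <= r -> 0 <= D ->
  - D <= x <= 1 + D -> - (r * D) <= Smap p q r i x <= 1 + r * D.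
Proof.
move=> /andP[p0 pr] /andP[q0 qr] D0 /andP[x0 x1].
icase i; apply/andP; split; nra.
Qed.

Lemma Smap_qlip p q1 q2 i x1 x2 : 0 <= p <= r -> 0 <= q1 <= r -> 0 <= q2 <= r ->
  `|x2| <= 1 ->
  `|Smap p q2 r i x2 - Smap p q1 r i x1| <= `|q2 - q1| + r * `|x2 - x1|.
Proof.
move=> /andP[p0 pr] /andP[q10 q1r] /andP[q20 q2r] hx.
have r1' : 0 <= r by apply: ltW.
have h1 := ler_norm (x2 - x1). have h2 : - (x2 - x1) <= `|x2 - x1| by rewrite -normrN ler_norm.
have h3 := ler_norm (q2 - q1). have h4 : - (q2 - q1) <= `|q2 - q1| by rewrite -normrN ler_norm.
have h5 := ler_norm x2. have h6 : - x2 <= `|x2| by rewrite -normrN ler_norm.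
rewrite ler_norml.
icase i; apply/andP; split; nra.
Qed.

Definition Yw p q (s : seq 'I_6) := foldr (fun i x => Smap p q r i x) 0 s.

Lemma Yw01 p q s : 0 <= p <= r -> 0 <= q <= r -> 0 <= Yw p q s <= 1.
Proof.
move=> hp hq; elim: s => [|i s IH] /=; first by rewrite lexx ler01.
exact: Smap01.
Qed.

Lemma Yw_qlip p q1 q2 s : 0 <= p <= r -> 0 <= q1 <= r -> 0 <= q2 <= r ->
  `|Yw p q2 s - Yw p q1 s| <= 2 * `|q2 - q1|.
Proof.
move=> hp hq1 hq2; have ? := r0; have ? := r1.
elim: s => [|i s IH] /=; first by rewrite subrr normr0 mulr_ge0.
have /andP[y0 y1] := Yw01 s hp hq2.
apply: le_trans (Smap_qlip i (Yw p q1 s) hp hq1 hq2 _) _.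
  by rewrite ger0_norm.
have := normr_ge0 (q2 - q1). nra.
Qed.

Lemma Keq_elim p q K y : K = \bigcup_(i in [set: 'I_6]) (Smap p q r i @` K) ->
  K y -> exists i y', K y' /\ y = Smap p q r i y'.
Proof.
move=> Keq Ky; rewrite Keq in Ky; case: Ky => i _ [y' Ky' <-].
by exists i, y'.
Qed.

Lemma Keq_intro p q K i y : K = \bigcup_(i in [set: 'I_6]) (Smap p q r i @` K) ->
  K y -> K (Smap p q r i y).
Proof. by move=> Keq Ky; rewrite Keq; exists i => //; exists y. Qed.

Lemma K01 p q K : 0 <= p <= r -> 0 <= q <= r -> is_attractor p q r K ->
  forall y, K y -> 0 <= y <= 1.
Proof.
move=> hp hq [Kc [Kne Keq]].
have [M HM] := bounded_ex Kc.
have ? := r0; have ? := r1.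
have H : forall n y, K y -> - (r ^+ n * `|M|) <= y <= 1 + r ^+ n * `|M|.
  elim => [|n IH] y Ky.
    have := HM y Ky; have := ler_norm M; rewrite expr0 mul1r ler_norml.
    move=> h1 /andP[h2 h3]; apply/andP; split; lra.
  have [i [y' [Ky' ->]]] := Keq_elim Keq Ky.
  rewrite exprS -mulrA; apply: Smap_ext => //.
    by rewrite mulr_ge0 // exprn_ge0 // ltW.
  exact: IH.
move=> y Ky.
have M0 : 0 <= `|M| by [].
have e0 : forall u, 0 < u -> exists N, r ^+ N * `|M| < u.
  move=> u u0.
  have h1 : 0 <= r < 1 by rewrite (ltW r0) /=; lra.
  have h2 : 0 < u / (`|M| + 1) by apply: divr_gt0 => //; lra.
  have [N [_ HN]] := pow_small 0%N h1 h2.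
  exists N; move: HN; rewrite ltr_pdivlMr; last by lra.
  have := exprn_ge0 N (ltW r0). nra.
apply/andP; split; rewrite leNgt; apply/negP => hy.
  have [N HN] := e0 (- y) ltac:(lra).
  have := H N y Ky. move=> /andP[h1 h2]. lra.
have [N HN] := e0 (y - 1) ltac:(lra).
have := H N y Ky. move=> /andP[h1 h2]. lra.
Qed.

Lemma K0 p q K : 0 <= p <= r -> 0 <= q <= r -> is_attractor p q r K -> K 0.
Proof.
move=> hp hq KA; have K01' := K01 hp hq KA; move: KA => [Kc [[x0 Kx0] Keq]].
have ? := r0; have ? := r1.
have Hn : forall n, K (p ^+ n * x0).
  elim => [|n IH]; first by rewrite expr0 mul1r.
  have := Keq_intro (@ord0 5) Keq IH; rewrite /Smap /= exprS mulrA //.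
apply: closure0 => // e e0.
move: hp => /andP[p0 pr].
have h1 : 0 <= p < 1 by rewrite p0 /=; lra.
have [N [_ HN]] := pow_small 0%N h1 e0.
exists (p ^+ N * x0); split => //.
have /andP[x00 x01] := K01' _ Kx0.
rewrite sub0r normrN normrM ger0_norm ?exprn_ge0 // ger0_norm //.
have := exprn_ge0 N p0. nra.
Qed.

Lemma K1 p q K : 0 <= p <= r -> 0 <= q <= r -> is_attractor p q r K -> K 1.
Proof.
move=> hp hq KA; have K01' := K01 hp hq KA; move: KA => [Kc [[x0 Kx0] Keq]].
have ? := r0; have ? := r1.
have Hn : forall n, K (1 - r ^+ n * (1 - x0)).
  elim => [|n IH]; first by rewrite expr0 mul1r opprB addrC subrK.
  have := Keq_intro (Ordinal (isT : (5 < 6)%N)) Keq IH; rewrite /Smap /=.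
  by rewrite exprS; congr K; ring.
apply: closure0 => // e e0.
have h1 : 0 <= r < 1 by rewrite ltW //=; lra.
have [N [_ HN]] := pow_small 0%N h1 e0.
exists (1 - r ^+ N * (1 - x0)); split => //.
have /andP[x00 x01] := K01' _ Kx0.
rewrite opprB addrC subrK normrM ger0_norm ?exprn_ge0 ?ltW // ger0_norm; last lra.
have := exprn_ge0 N (ltW r0). nra.
Qed.

Lemma Kcover p q K : 0 <= p <= r -> 0 <= q <= r -> is_attractor p q r K ->
  forall n y, K y -> exists t : n.-tuple 'I_6, `|y - Yw p q t| <= r ^+ n.
Proof.
move=> hp hq KA; have K01' := K01 hp hq KA; move: KA => [Kc [_ Keq]].
elim => [|n IH] y Ky.
  exists [tuple]; rewrite /Yw /= subr0 expr0.
  by have /andP[? ?] := K01' _ Ky; rewrite ger0_norm.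
have [i [y' [Ky' ->]]] := Keq_elim Keq Ky.
have [t Ht] := IH y' Ky'.
exists [tuple of i :: t]; rewrite /Yw /=.
apply: le_trans (Smap_lip _ _ _ hp hq) _.
by rewrite exprS ler_wpM2l // ltW.
Qed.
End S.
Lemma reduce (R : realType) (P : R -> Prop) (rho b : R) : 0 < rho < 1 ->
  (forall u, P u -> u <= 1) -> (forall u, P u -> 0 < u < b -> P (u / rho)) ->
  forall u, 0 < u -> P u -> exists i : nat, P (u / rho ^+ i) /\ b <= u / rho ^+ i.
Proof.
move=> /andP[rho0 rho1] P1 Pst u u0 Pu.
have h1 : 0 <= rho < 1 by rewrite ltW.
have [N [_ HN]] := pow_small 0%N h1 u0.
elim: N u u0 Pu HN => [|N IH] u u0 Pu HN.
  by move: HN; rewrite expr0 => HN; have := P1 u Pu; lra.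
case: (leP b u) => hb.
  by exists 0%N; rewrite expr0 divr1.
have Pu' := Pst u Pu ltac:(by rewrite u0 hb).
have u0' : 0 < u / rho by apply: divr_gt0.
have HN' : rho ^+ N < u / rho.
  by rewrite ltr_pdivlMr // mulrC -exprS.
have [i [Pi Hi]] := IH _ u0' Pu' HN'.
exists i.+1; have -> : u / rho ^+ i.+1 = u / rho / rho ^+ i.
  by rewrite exprS invfM mulrA.
by split.
Qed.

Definition Acond (R : realType) (r c p q : R) (n : nat) (s t : seq 'I_6) : Prop :=
  3/15 - r ^+ n <= Yw r p q s /\ 3/15 - r ^+ n <= 1 - Yw r p q t /\
  `|c * q * Yw r p q s - (1 - Yw r p q t)| <= 6 * r ^+ n.

Lemma prodb (R : realType) (c x : R) : 0 <= c -> 0 <= x <= 1 -> 0 <= c * x <= c.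
Proof. move=> c0 /andP[x0 x1]; rewrite mulr_ge0 //=; rewrite -[leRHS]mulr1; exact: ler_wpM2l. Qed.

Section S2.
Variable R : realType.
Variable r : R.
Hypothesis r0 : 0 < r.
Hypothesis r1 : r < 1/36.

Lemma S3E p q x : Smap p q r (inord 2) x = 8/15 - q * x.
Proof. rewrite /Smap; have -> : (val (inord 2 : 'I_6)) = 2%N by exact: inordK. by []. Qed.
Lemma S4E p q x : Smap p q r (inord 3) x = 8/15 - r + r * x.
Proof. rewrite /Smap; have -> : (val (inord 3 : 'I_6)) = 3%N by exact: inordK. by []. Qed.

Lemma bad_pt p q K : 0 < p < r -> 0 < q < r -> is_attractor p q r K ->
  ~ ((Smap p q r (inord 2) @` K) `&` (Smap p q r (inord 3) @` K) = [set hh R]) ->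
  exists i j : nat, forall n, exists s t : n.-tuple 'I_6,
    Acond r (p ^+ i / r ^+ j.+1) p q n s t.
Proof.
move=> /andP[p0 pr] /andP[q0 qr] KA Hneq.
have ? := r0; have ? := r1.
have hp : 0 <= p <= r by rewrite ltW //= ltW.
have hq : 0 <= q <= r by rewrite ltW //= ltW.
have K01' := K01 r0 r1 hp hq KA.
have K0' := K0 r0 r1 hp hq KA.
have K1' := K1 r0 r1 hp hq KA.
have [Kc [Kne Keq]] := KA.
have [x [[[y Ky Hy] [z Kz Hz]] hx]] :
    exists x, ((Smap p q r (inord 2) @` K) `&` (Smap p q r (inord 3) @` K)) x /\ x <> hh R.
  apply: contrapT => Hn; apply: Hneq; apply/seteqP; split => x0.
    move=> Hx; apply: contrapT => hx; apply: Hn; exists x0; split => //.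
  move=> ->; split; [exists 0 | exists 1] => //; rewrite ?S3E ?S4E /hh; lra.
move: Hy Hz; rewrite S3E S4E => Hy Hz.
have /andP[y0 y1] := K01' _ Ky.
have /andP[z0 z1] := K01' _ Kz.
have ypos : 0 < y.
  rewrite lt_neqAle y0 andbT; apply/eqP => y00; apply: hx.
  by rewrite -Hy -y00 mulr0 subr0.
set w := 1 - z.
have qyrw : q * y = r * w by rewrite /w; lra.
have wpos : 0 < w.
  have : 0 < q * y by apply: mulr_gt0.
  rewrite qyrw => h; rewrite (pmulr_rgt0 _ r0) in h; exact: h.
have [i [Ki Hi]] : exists i : nat, K (y / p ^+ i) /\ 3/15 <= y / p ^+ i.
  apply: (@reduce R K p (3/15)) => //; first by rewrite p0 /=; lra.
    by move=> u /K01' /andP[].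
  move=> u Ku /andP[u0 u1].
  have [k [u' [Ku' Hu]]] := Keq_elim Keq Ku.
  have hu' := K01' _ Ku'.
  have /andP[? ?] := prodb (ltW p0) hu'.
  have /andP[? ?] := prodb (ltW q0) hu'.
  have /andP[? ?] := prodb (ltW r0) hu'.
  have /andP[u'0 u'1] := hu'.
  move: Hu; case: k => -[|[|[|[|[|[|?]]]]]] ?; rewrite /Smap /aa /hh /= => Hu.
  1: by rewrite Hu (_ : p * u' / p = u') //; field; rewrite gt_eqF.
  1-6: by exfalso; lra.
have [j [Kj Hj]] : exists j : nat, K (1 - w / r ^+ j) /\ 3/15 <= w / r ^+ j.
  apply: (@reduce R (fun u => K (1 - u)) r (3/15)) => //; first by rewrite r0 /=; lra.
    by move=> u /K01' /andP[]; lra.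
  move=> u Ku /andP[u0 u1].
  have [k [u' [Ku' Hu]]] := Keq_elim Keq Ku.
  have hu' := K01' _ Ku'.
  have /andP[? ?] := prodb (ltW p0) hu'.
  have /andP[? ?] := prodb (ltW q0) hu'.
  have /andP[? ?] := prodb (ltW r0) hu'.
  have /andP[u'0 u'1] := hu'.
  move: Hu; case: k => -[|[|[|[|[|[|?]]]]]] ?; rewrite /Smap /aa /hh /= => Hu.
  1-5: by exfalso; lra.
  1,2: have hu : u = (1 - u') * r by lra.
  1,2: by rewrite hu mulfK ?gt_eqF // opprB addrC subrK.
  by rewrite /w opprB addrC subrK.
set y' := y / p ^+ i in Ki Hi.
set w' := w / r ^+ j in Kj Hj.
set c := p ^+ i / r ^+ j.+1.
have pi0 : p ^+ i != 0 by rewrite expf_neq0 // gt_eqF.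
have rj0 : r ^+ j != 0 by rewrite expf_neq0 // gt_eqF.
have r00 : r != 0 by rewrite gt_eqF.
have E : c * q * y' = w'.
  rewrite /c /y' /w'.
  have -> : p ^+ i / r ^+ j.+1 * q * (y / p ^+ i) = (q * y) / (r * r ^+ j).
    by rewrite exprS; field; rewrite pi0 rj0 r00.
  by rewrite qyrw; field; rewrite rj0 r00.
have /andP[y'0 y'1] := K01' _ Ki.
have /andP[w'0 w'1] := K01' _ Kj.
have c0 : 0 <= c by rewrite /c divr_ge0 // exprn_ge0 // ltW.
have lam0 : 0 <= c * q by rewrite mulr_ge0 // ltW.
have lam5 : c * q <= 5 by nra.
exists i, j => n.
have [s Hs] := Kcover r0 r1 hp hq KA n Ki.
have [t Ht] := Kcover r0 r1 hp hq KA n Kj.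
exists s, t; rewrite /Acond -/c.
set Y := Yw r p q s in Hs *; set T := Yw r p q t in Ht *.
set e := r ^+ n in Hs Ht *.
have e0 : 0 <= e by rewrite /e exprn_ge0 // ltW.
have h5 : `|c * q * (Y - y')| <= 5 * e.
  rewrite normrM (ger0_norm lam0) distrC.
  apply: le_trans (ler_wpM2l lam0 Hs) _; exact: ler_wpM2r.
have HE : c * q * Y - (1 - T) = c * q * (Y - y') - ((1 - w') - T).
  by rewrite -E; ring.
have h6 : `|c * q * Y - (1 - T)| <= 6 * e.
  rewrite HE; apply: le_trans (ler_normB _ _) _; lra.
move: Hs Ht; rewrite !ler_norml => /andP[h1 h2] /andP[h3 h4].
split; [lra | split; [lra| by rewrite -ler_norml]].
Qed.

Lemma diam c p q1 q2 n s t : 0 < c -> 0 <= p <= r -> 0 < q1 < r -> 0 < q2 < r ->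
  (2 <= n)%N -> Acond r c p q1 n s t -> Acond r c p q2 n s t ->
  `|q2 - q1| <= 12 * r ^+ n.
Proof.
move=> c0 hp hq1 hq2 n2.
wlog: q1 q2 hq1 hq2 / q1 <= q2.
  move=> H A1 A2; case: (leP q1 q2) => h; first exact: H.
  by rewrite distrC; apply: H => //; apply: ltW.
move=> q12 [hY1 [hW1 hg1]] [hY2 [hW2 hg2]].
have ? := r0; have ? := r1.
move: hq1 hq2 => /andP[q10 q1r] /andP[q20 q2r].
have hq1 : 0 <= q1 <= r by rewrite !ltW.
have hq2 : 0 <= q2 <= r by rewrite !ltW.
have LY := Yw_qlip r0 r1 s hp hq1 hq2.
have LT := Yw_qlip r0 r1 t hp hq1 hq2.
set e := r ^+ n in hY1 hW1 hg1 hY2 hW2 hg2 *.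
have e0 : 0 <= e by rewrite /e exprn_ge0 // ltW.
have ee : e <= r ^+ 2.
  rewrite /e -(subnKC n2) exprD -[leRHS]mulr1; apply: ler_wpM2l.
    by rewrite exprn_ge0 // ltW.
  by apply: exprn_ile1; [apply: ltW | lra].
have er : e < 1/1296.
  apply: le_lt_trans ee _; rewrite expr2.
  have : r * r < 1/36 * r by rewrite ltr_pM2r.
  lra.
set Y1 := Yw r p q1 s in hY1 hg1 LY *.
set Y2 := Yw r p q2 s in hY2 hg2 LY *.
set T1 := Yw r p q1 t in hW1 hg1 LT *.
set T2 := Yw r p q2 t in hW2 hg2 LT *.
set d := q2 - q1.
have d0 : 0 <= d by rewrite /d subr_ge0.
rewrite (ger0_norm d0) in LY LT *.
move: LY LT hg1 hg2; rewrite !ler_norml => /andP[LY1 LY2] /andP[LT1 LT2] /andP[g11 g12] /andP[g21 g22].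
set P := c * q2 * Y2 in g21 g22.
have Pge : 3/15 - 7 * e <= P by lra.
have Y2q : 0 <= Y2 - 2 * q2 by lra.
have st1 : (3/15 - 7 * e) * (Y2 - 2 * q2) <= P * (Y2 - 2 * q2) by apply: ler_wpM2r.
have st2 : (3/15 - e) * (3/15 - 7 * e - 3 * q2) <= Y2 * (3/15 - 7 * e - 3 * q2).
  by apply: ler_wpM2r => //; lra.
have st3 : 0 < (3/15 - e) * (3/15 - 7 * e - 3 * q2) - 2 * (3/15 - 7 * e) * q2.
  nra.
have key0 : 0 <= q2 * Y2 * (c * Y2 - 2 * c * q2 - 3).
  have -> : q2 * Y2 * (c * Y2 - 2 * c * q2 - 3) = P * (Y2 - 2 * q2) - 3 * q2 * Y2.
    by rewrite /P; ring.
  nra.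
have key : 3 <= c * Y2 - 2 * c * q2.
  have qY : 0 < q2 * Y2 by apply: mulr_gt0 => //; lra.
  by rewrite pmulr_rge0 // subr_ge0 in key0.
have cq : c * q1 <= c * q2 by apply: ler_wpM2l => //; apply: ltW.
have cq0 : 0 <= c * q1 by apply: mulr_ge0; apply: ltW.
have gdiff : c * q2 * Y2 - (1 - T2) - (c * q1 * Y1 - (1 - T1)) =
   c * d * Y2 + c * q1 * (Y2 - Y1) - (T1 - T2).
  by rewrite /d; ring.
have t1 : - (c * q1 * (2 * d)) <= c * q1 * (Y2 - Y1).
  rewrite -mulrN; apply: ler_wpM2l => //; lra.
have t2 : d * 3 <= d * (c * Y2 - 2 * c * q2) by apply: ler_wpM2l.
have t3 : c * q1 * (2 * d) <= c * q2 * (2 * d) by apply: ler_wpM2r => //; lra.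
have : d <= c * q2 * Y2 - (1 - T2) - (c * q1 * Y1 - (1 - T1)).
  rewrite gdiff.
  have -> : c * d * Y2 = d * (c * Y2) by ring.
  have : d * (c * Y2 - 2 * c * q2) = d * (c * Y2) - c * q2 * (2 * d) by ring.
  lra.
move=> hfin; rewrite /P in g21 g22; lra.
Qed.
End S2.
Lemma eq_set_measurable d (T : measurableType d) (A B : set T) :
  measurable A -> A = B -> measurable B.
Proof. by move=> ? <-. Qed.

Section M.
Variable R : realType.
Local Notation mf f := (measurable_fun [set: R * R] f).

Lemma mle (f g : R * R -> R) : mf f -> mf g -> measurable [set z | f z <= g z].
Proof.
move=> hf hg; have H := measurable_fun_ler hf hg measurableT (Y := [set true]) I.
apply: (eq_set_measurable H); apply/seteqP; split => z /=.
  by case=> _; rewrite /preimage /= => ->.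
by move=> h; split => //; rewrite /preimage /= h.
Qed.

Lemma mlt (f g : R * R -> R) : mf f -> mf g -> measurable [set z | f z < g z].
Proof.
move=> hf hg; have H := measurable_fun_ltr hf hg measurableT (Y := [set true]) I.
apply: (eq_set_measurable H); apply/seteqP; split => z /=.
  by case=> _; rewrite /preimage /= => ->.
by move=> h; split => //; rewrite /preimage /= h.
Qed.

Lemma mfst : mf fst. Proof. exact: measurable_fst. Qed.
Lemma msnd : mf snd. Proof. exact: measurable_snd. Qed.
Lemma mcst (c : R) : mf (fun _ => c). Proof. exact: measurable_cst. Qed.
Lemma madd (f g : R * R -> R) : mf f -> mf g -> mf (fun z => f z + g z).
Proof. exact: measurable_funD. Qed.
Lemma msub (f g : R * R -> R) : mf f -> mf g -> mf (fun z => f z - g z).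
Proof. exact: measurable_funB. Qed.
Lemma mmul (f g : R * R -> R) : mf f -> mf g -> mf (fun z => f z * g z).
Proof. exact: measurable_funM. Qed.
Lemma mexp (f : R * R -> R) n : mf f -> mf (fun z => f z ^+ n).
Proof. exact: measurable_funX. Qed.
Lemma mnorm (f : R * R -> R) : mf f -> mf (fun z => `|f z|).
Proof. move=> hf; exact: measurableT_comp. Qed.

Lemma mopp (f : R * R -> R) : mf f -> mf (fun z => - f z).
Proof. exact: measurable_funN. Qed.

Lemma mand (P Q : R * R -> Prop) : measurable [set z | P z] -> measurable [set z | Q z] ->
  measurable [set z | P z /\ Q z].
Proof. move=> hP hQ; exact: (measurableI _ _ hP hQ). Qed.

Lemma mYw (r : R) s : mf (fun z => Yw r z.1 z.2 s).
Proof.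
elim: s => [|i s IH] /=; first exact: mcst.
case: i => -[|[|[|[|[|[|k]]]]]] Hk; rewrite /Smap /aa /hh /=;
repeat first [apply: mopp | apply: madd | apply: msub | apply: mmul | exact: mfst | exact: msnd | exact: IH | exact: mcst].
Qed.

Definition Aset (r : R) (i j n : nat) (s t : seq 'I_6) : set (R * R) :=
  [set z | 0 < z.1 /\ z.1 < r /\ 0 < z.2 /\ z.2 < r /\
           Acond r (z.1 ^+ i / r ^+ j.+1) z.1 z.2 n s t].

Lemma mAset r i j n s t : measurable (Aset r i j n s t).
Proof.
rewrite /Aset /Acond.
repeat apply: mand.
all: try apply: mlt; try apply: mle.
all: repeat first [apply: mnorm | apply: mopp | apply: madd | apply: msub | apply: mmul | apply: mexp | exact: mfst | exact: msnd | exact: mYw | exact: mcst].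
Qed.

Definition Mset (r : R) (i j : nat) : set (R * R) :=
  \bigcap_(n in [set: nat])
    \big[setU/set0]_(st <- enum {: (n.+2).-tuple 'I_6 * (n.+2).-tuple 'I_6})
      Aset r i j n.+2 st.1 st.2.

Lemma mMset r i j : measurable (Mset r i j).
Proof.
apply: bigcapT_measurable => n; apply: bigsetU_measurable => st _; exact: mAset.
Qed.
End M.
Lemma in_bigU (I : eqType) (T : Type) (F : I -> set T) (s : seq I) x :
  (\big[setU/set0]_(i <- s) F i) x <-> exists2 i, i \in s & F i x.
Proof.
elim: s => [|i s IH]; first by rewrite big_nil; split => // -[].
rewrite big_cons; split.
  case=> [h|/IH [k hk h]]; first by exists i => //; rewrite mem_head.
  by exists k => //; rewrite in_cons hk orbT.
case=> k; rewrite in_cons => /orP [/eqP ->|hk] h; first by left.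
by right; apply/IH; exists k.
Qed.

Lemma measU_seq (R : realType) (I : Type) (F : I -> set R) (s : seq I) (c : R) :
  (forall i, measurable (F i)) -> (forall i, (lebesgue_measure (F i) <= c%:E)%E) ->
  (lebesgue_measure (\big[setU/set0]_(i <- s) F i) <= ((size s)%:R * c)%:E)%E.
Proof.
move=> mF hF; elim: s => [|i s IH]; first by rewrite big_nil measure0 mul0r.
rewrite big_cons.
apply: le_trans (measureU2 lebesgue_measure (mF i) (bigsetU_measurable _ _)) _.
  by move=> k _; exact: mF.
rewrite /= -[(size s).+1]addn1 natrD mulrDl mul1r EFinD addeC.
exact: leeD.
Qed.

Section F.
Variable R : realType.
Variable r : R.
Hypothesis r0 : 0 < r.
Hypothesis r1 : r < 1/36.

Definition Ival (i j n : nat) (p : R) (st : seq 'I_6 * seq 'I_6) : set R :=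
  let q0 := xget 0 [set q | Aset r i j n st.1 st.2 (p, q)] in
  `[q0 - 12 * r ^+ n, q0 + 12 * r ^+ n]%classic.

Lemma sec_sub i j p n :
  xsection (Mset r i j) p `<=`
  \big[setU/set0]_(st <- enum {: (n.+2).-tuple 'I_6 * (n.+2).-tuple 'I_6})
     Ival i j n.+2 p (tval st.1, tval st.2).
Proof.
move=> q; rewrite /xsection /= inE => Hm.
have := Hm n I; move=> /in_bigU [st _ HA].
apply/in_bigU; exists st; first by rewrite mem_enum.
rewrite /Ival /=.
have HB := @xgetI _ 0 [set q | Aset r i j n.+2 st.1 st.2 (p, q)] q HA.
set q0 := xget _ _ in HB *.
move: HA HB => /= [p0 [pr [q0' [qr A1]]]] [_ [_ [q00 [q0r A2]]]].
have c0 : 0 < p ^+ i / r ^+ j.+1 by rewrite divr_gt0 // exprn_gt0.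
have hp : 0 <= p <= r by rewrite !ltW.
have := diam r0 r1 c0 hp (q1 := q0) (q2 := q) (n := n.+2) ltac:(by rewrite q00 q0r) ltac:(by rewrite q0' qr) isT A2 A1.
rewrite ler_norml => /andP[h1 h2].
rewrite in_itv /=; apply/andP; split; lra.
Qed.

Lemma Ival_m i j n p st : measurable (Ival i j n p st).
Proof. exact: measurable_itv. Qed.

Lemma Ival_le i j n p st : (lebesgue_measure (Ival i j n p st) <= (24 * r ^+ n)%:E)%E.
Proof.
rewrite /Ival lebesgue_measure_itv /=.
have e0 : 0 <= r ^+ n by rewrite exprn_ge0 // ltW.
case: ifP => _; last by rewrite lee_fin mulr_ge0.
rewrite -EFinB lee_fin; lra.
Qed.

Lemma sec_le i j p n :
  (lebesgue_measure (xsection (Mset r i j) p) <= (24 * (36 * r) ^+ n.+2)%:E)%E.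
Proof.
have mS : measurable (xsection (Mset r i j) p) by apply: measurable_xsection; exact: mMset.
have H := @le_measure _ _ _ (@lebesgue_measure R) _ _ _ _ (@sec_sub i j p n).
apply: le_trans (H _ _) _.
- by rewrite inE.
- by rewrite inE; apply: bigsetU_measurable => st _; exact: Ival_m.
apply: le_trans (measU_seq (enum {: (n.+2).-tuple 'I_6 * (n.+2).-tuple 'I_6}) _ (fun st : (n.+2).-tuple 'I_6 * (n.+2).-tuple 'I_6 => Ival_le i j n.+2 p (tval st.1, tval st.2))) _.
  by move=> st; exact: Ival_m.
rewrite -cardE card_prod card_tuple card_ord lee_fin.
rewrite natrM natrX (_ : 36 = 6 * 6 :> R); last by rewrite -natrM.
rewrite !exprMn.
set a := (6 : R) ^+ n.+2; set b := r ^+ n.+2.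
by rewrite le_eqVlt; apply/orP; left; apply/eqP; ring.
Qed.

Lemma sec0 i j p : lebesgue_measure (xsection (Mset r i j) p) = 0%E.
Proof.
set S := xsection _ _.
have ? := r0; have ? := r1.
have key : forall e, 0 < e -> (lebesgue_measure S <= e%:E)%E.
  move=> e e0.
  have h1 : 0 <= 36 * r < 1 by apply/andP; split; lra.
  have h2 : 0 < e / 24 by apply: divr_gt0 => //; lra.
  have [N [HN2 HN]] := pow_small 2 h1 h2.
  apply: le_trans (sec_le i j p (N - 2)) _.
  have eN : (N - 2).+2 = N by rewrite -addn2 subnK.
  rewrite eN lee_fin.
  move: HN; rewrite ltr_pdivlMr; last lra.
  lra.
have h0 : (0 <= lebesgue_measure S)%E by apply: measure_ge0.
move: h0 key; case: (lebesgue_measure S) => [x| |] h0 key.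
- rewrite lee_fin in h0.
  case: (leP x 0) => hx; first by have -> : x = 0 by apply/eqP; rewrite eq_le h0 hx.
  have hx2 : 0 < x / 2 by lra.
  have := key _ hx2; rewrite lee_fin => h; exfalso; lra.
- by have := key 1 ltr01.
- by [].
Qed.
End F.

Lemma prod0 (R : realType) (r : R) (r0 : 0 < r) (r1 : r < 1/36) i j :
  ((@lebesgue_measure R) \x (@lebesgue_measure R))%E (Mset r i j) = 0%E.
Proof.
rewrite /product_measure1.
rewrite (_ : (lebesgue_measure \o xsection _) = cst 0%E); last first.
  by apply: funext => x; rewrite /= (sec0 r0 r1).
exact: integral0.
Qed.

Lemma bad_in_M (R : realType) (r : R) (r0 : 0 < r) (r1 : r < 1/36) p q :
  0 < p < r -> 0 < q < r -> ~ unique_one_point p q r ->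
  exists i j, Mset r i j (p, q).
Proof.
move=> hp hq hn.
have [K [KA HK]] : exists K, is_attractor p q r K /\
   ~ ((Smap p q r (inord 2) @` K) `&` (Smap p q r (inord 3) @` K) = [set hh R]).
  apply: contrapT => H; apply: hn => K KA.
  apply: contrapT => HK; apply: H; by exists K.
have [i [j H]] := bad_pt r0 r1 hp hq KA HK.
exists i, j => n _.
have [s [t A]] := H n.+2.
apply/in_bigU; exists (s, t); first by rewrite mem_enum.
move: hp hq => /andP[? ?] /andP[? ?].
by rewrite /Aset /=.
Qed.

Theorem theorem4 (R : realType) (r : R) :
  0 < r < 1 / 36 ->
  ((lebesgue_measure \x lebesgue_measure)%E).-negligible
     ([set pq : R * R | (pq.1 \in `]0, r[) /\ (pq.2 \in `]0, r[)]
      `\` [set pq : R * R | unique_one_point pq.1 pq.2 r])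
  /\
  (forall p : R, 0 < p < r ->
     (@lebesgue_measure R).-negligible
       (`]0, r[%classic `\` [set q : R | unique_one_point p q r])).
Proof.
move=> /andP[r0 r1]; split.
  have NS := @negligibleS _ _ _ ((@lebesgue_measure R) \x (@lebesgue_measure R))%E (\bigcup_i \bigcup_j Mset r i j). apply: NS.
    move=> [p q] /= [[hp hq] hn].
    rewrite in_itv /= in hp; rewrite in_itv /= in hq.
    have [i [j HM]] := bad_in_M r0 r1 hp hq hn.
    by exists i => //; exists j.
  apply: negligible_bigcup => i; apply: negligible_bigcup => j.
  exists (Mset r i j); split => //; first exact: mMset.
  exact: prod0.
move=> p hp.
have NS := @negligibleS _ _ _ (@lebesgue_measure R) (\bigcup_i \bigcup_j xsection (Mset r i j) p).
apply: NS.
  move=> q /= [hq hn].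
  rewrite /= in_itv /= in hq.
  have [i [j HM]] := bad_in_M r0 r1 hp hq hn.
  exists i => //; exists j => //.
  by rewrite /xsection /= inE.
apply: negligible_bigcup => i; apply: negligible_bigcup => j.
exists (xsection (Mset r i j) p); split => //.
  by apply: measurable_xsection; exact: mMset.
exact: sec0.
Qed.
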